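(* Let $G$ be a finite group of order $n>1$, and let $q$ and $p$ be the smallest and the largest prime divisors of $n$, respectively. Suppose that $$\psi(G)\geq \frac{1}{q}\,n\,\varphi(n).$$ Then either $G$ has a normal cyclic Sylow $p$-subgroup, or $G$ is solvable and has a cyclic maximal subgroup of index either $p$ or $p+1$.
   Context: For a finite group $G$, $\psi(G)=\sum_{g\in G} o(g)$ denotes the sum of the orders of all elements of $G$. $\varphi$ is Euler's totient function. *)

(* Defs.v *)
From mathcomp Require Import all_boot all_fingroup all_solvable.
Set Implicit Arguments. Unset Strict Implicit. Unset Printing Implicit Defensive.
Local Open Scope group_scope.

Definition psi (gT : finGroupType) (G : {set gT}) : nat := (\sum_(g in G) #[g])%N.

(* Main.v *)
Require Import Defs.
From mathcomp Require Import all_boot all_fingroup all_solvable.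
From mathcomp Require Import integral_char.
From mathcomp Require Import zify.
Set Implicit Arguments. Unset Strict Implicit. Unset Printing Implicit Defensive.


Lemma path_last_gt (a : nat) (r : seq nat) : path ltn a r -> r != [::] -> a < last a r.
Proof.
move=> pr nr; have := order_path_min ltn_trans pr.
move=> /allP H; apply: H.
case: r nr pr => // b r _ _ /=; exact: mem_last.
Qed.

Lemma inv_primes (a : nat) (r : seq nat) :
  sorted ltn (a :: r) -> all prime (a :: r) ->
  a * \prod_(x <- a :: r) x <= (last a r + 2) * \prod_(x <- a :: r) x.-1
  \/ a :: r = [:: 2; 3] \/ a :: r = [:: 2; 3; 5].
Proof.
elim/last_ind: r => [|r p IH].
  move=> _ /= /andP[pa _]; left; rewrite !big_cons !big_nil !muln1.
  have := prime_gt1 pa; nia.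
move=> srt allp.
have [srt' pl] : sorted ltn (a :: r) /\ last a r < p.
  by move: srt; rewrite /= rcons_path => /andP[h1 h2].
have allp' : all prime (a :: r).
  by move: allp; rewrite /= all_rcons => /and3P[h1 h2 h3]; rewrite /= h1 h3.
have pp : prime p by move: allp; rewrite /= all_rcons => /and3P[].
have pl' : prime (last a r) by move/allP: allp'; apply; exact: mem_last.
have p2 := prime_gt1 pl'.
rewrite last_rcons -rcons_cons !big_rcons /=.
set A := \prod_(x <- a :: r) x; set B := \prod_(x <- a :: r) x.-1.
case: (IH srt' allp') => [H|[E|E]].
- have [le2|eq2] : last a r + 2 <= p \/ (last a r = 2 /\ p = 3).
    case: (even_prime pl') => [e2|o1]; case: (even_prime pp) => [e3|o2].
    + lia.
    + rewrite e2; lia.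
    + rewrite e3 in pl; lia.
    + have : last a r != p by rewrite neq_ltn pl.
      have : p != (last a r).+1 by apply/eqP => E; move: o2; rewrite E /= o1.
      lia.
  + left; have Hp := prime_gt1 pp.
    have H2 := leq_mul H (leqnn p).
    have H3 : (last a r + 2) * p <= (p + 2) * p.-1 by nia.
    have H4 := leq_mul H3 (leqnn B).
    nia.
  + right; left. case: eq2 => e2 e3; subst p.
    (* r must be such that a::r = [:: 2] *)
    case: r srt' allp' e2 H {IH srt allp pl pl' p2 A B} => [|b r] /=.
      by move=> _ _ ->.
    move=> srt' allp' e2 _.
    have := @path_last_gt a (b :: r) srt' isT; rewrite /= e2.
    move: allp' => /andP[pa _]; have := prime_gt1 pa; lia.
- have [Ea Er] : a = 2 /\ r = [:: 3] by case: E.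
  rewrite /A /B Ea Er /= in pl *.
  have [->|p7] : p = 5 \/ 7 <= p.
    have n4 : p != 4 by apply/eqP => E4; rewrite E4 in pp.
    have n6 : p != 6 by apply/eqP => E4; rewrite E4 in pp.
    lia.
    by right; right.
  left; rewrite !big_cons !big_nil /=; nia.
- have [Ea Er] : a = 2 /\ r = [:: 3; 5] by case: E.
  rewrite /A /B Ea Er /= in pl *.
  have n6 : p != 6 by apply/eqP => E4; rewrite E4 in pp.
  have p7 : 7 <= p by lia.
  left; rewrite !big_cons !big_nil /=; nia.
Qed.

Lemma n_prod (n : nat) : 0 < n -> n = \prod_(p <- primes n) p ^ logn p n.
Proof.
move=> n0; rewrite {1}(prod_prime_decomp n0) prime_decompE big_map //.
Qed.

Lemma totient_prod (n : nat) : 0 < n ->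
  totient n * \prod_(r <- primes n) r = n * \prod_(r <- primes n) r.-1.
Proof.
move=> n0; rewrite (totientE n0).
transitivity (\prod_(r <- primes n) (r.-1 * r ^ (logn r n))).
  rewrite -big_split /= big_seq [RHS]big_seq; apply: eq_bigr => r rp.
  have : 0 < logn r n by rewrite logn_gt0.
  case: (logn r n) => // e _ /=; rewrite expnS; lia.
by rewrite big_split /= -(@n_prod n n0) mulnC.
Qed.

Lemma nt_bound (n t : nat) : 1 < n -> t %| n ->
  t * totient n < pdiv n * n -> t <= (max_pdiv n).+1.
Proof.
move=> n1 tn H.
have n0 : 0 < n by lia.
have tp := @totient_prod n n0.
set A := \prod_(r <- primes n) r in tp; set B := \prod_(r <- primes n) r.-1 in tp.
have H2 : t * B < pdiv n * A.
  have H3 : (t * totient n) * A < (pdiv n * n) * A.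
    rewrite ltn_pmul2r // /A big_seq_cond prodn_cond_gt0 // => r /andP[rp _].
    by apply: prime_gt0; move: rp; rewrite mem_primes => /andP[].
  move: H3; rewrite -!mulnA tp; nia.
have : primes n != [::].
  apply/eqP => E; have : pdiv n \in primes n by rewrite mem_primes pdiv_prime // n0 pdiv_dvd.
  by rewrite E.
have srt := sorted_primes n.
have allp : all prime (primes n).
  by apply/allP => r; rewrite mem_primes => /andP[].
rewrite /pdiv /max_pdiv in H2 *.
rewrite /A /B in H2.
case E0: (primes n) srt allp H2 => [//|a r] srt allp H2 _.
case: (@inv_primes a r srt allp) => [HH|[E|E]].
- have : t * \prod_(x <- a :: r) x.-1 < (last a r + 2) * \prod_(x <- a :: r) x.-1.
    exact: leq_trans H2 HH.
  rewrite ltn_pmul2r; first by rewrite /=; lia.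
  rewrite big_seq_cond prodn_cond_gt0 // => x /andP[xp _].
  move/allP: allp => /(_ x xp) /prime_gt1; lia.
- rewrite E /= in H2 *; rewrite !big_cons !big_nil /= in H2.
  have t5 : t != 5.
    apply/eqP => E5; have d5 : 5 %| n by rewrite -E5.
    have : 5 \in primes n by rewrite mem_primes n0 d5.
    by rewrite E0 E.
  lia.
- rewrite E /= in H2 *; rewrite !big_cons !big_nil /= in H2.
  have t5 : t != 7.
    apply/eqP => E5; have d5 : 7 %| n by rewrite -E5.
    have : 7 \in primes n by rewrite mem_primes n0 d5.
    by rewrite E0 E.
  lia.
Qed.

Local Open Scope group_scope.

Lemma aux_ineq a b m : a <= b * m -> 1 < m -> 1 + a < (1 + b) * m.
Proof. nia. Qed.

Section S.
Variable gT : finGroupType.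
Implicit Types G H X : {group gT}.

Lemma psi_lt G x : x \in G -> (forall y, y \in G -> #[y] <= #[x]) -> 1 < #|G| ->
  psi G < #|G| * #[x].
Proof.
move=> Gx maxx G1.
have [y Gy ny1] : exists2 y, y \in G & y != 1.
  have : G :!=: 1 by rewrite -cardG_gt1.
  by case/trivgPn => y Gy ny; exists y.
have m2 : 1 < #[x].
  apply: leq_trans (maxx y Gy); rewrite ltn_neqAle order_gt0 andbT eq_sym.
  by rewrite order_eq1.
rewrite /psi (bigD1 1) //= order1.
have : \sum_(i in G | i != 1) #[i] <= \sum_(i in G | i != 1) #[x].
  by apply: leq_sum => i /andP[Gi _]; apply: maxx.
rewrite sum_nat_const.
have -> : #|[pred i in G | i != 1]| = #|G^#|.
  by apply: eq_card => i; rewrite !inE andbC.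
have cG := cardsD1 1 G; rewrite group1 /= in cG.
move=> h; have := @aux_ineq _ _ _ h m2; rewrite -cG; exact.
Qed.

Lemma exists_t G : 1 < #|G| -> #|G| * totient #|G| <= pdiv #|G| * psi G ->
  exists2 x, x \in G & #|G : <[x]>| * totient #|G| < pdiv #|G| * #|G|.
Proof.
move=> G1 H.
have [x' Gx maxx] : exists2 x', x' \in G & forall y, y \in G -> #[y] <= #[x'].
  case: (@arg_maxnP _ 1 (mem G) (fun y => #[y]) (group1 G)) => y Gy maxy.
  by exists y.
exists x' => //.
have hp := @psi_lt G x' Gx maxx G1.
have sXG : <[x']> \subset G by rewrite cycle_subG.
have L := Lagrange sXG; rewrite -orderE in L.
set t := #|G : <[x']>| in L *; set n := #|G| in L H hp *.
set m := #[x'] in L hp; set ph := totient n in H *; set q := pdiv n in H *.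
set ps := psi G in H hp.
have n0 : 0 < n by rewrite /n; lia.
rewrite -(ltn_pmul2l n0).
have h1 : n * ph * t <= q * ps * t by rewrite leq_mul2r H orbT.
have h2 : q * ps * t < q * (n * m) * t.
  rewrite ltn_pmul2r ?ltn_pmul2l //; first by apply: pdiv_gt0.
  by rewrite lt0n; apply/eqP => t0; move: L; rewrite t0 muln0; lia.
nia.
Qed.

End S.

Section S.
Variable gT : finGroupType.
Implicit Types G H Q Y X : {group gT}.

Definition corefree (Y Q : {set gT}) :=
  forall N : {group gT}, N \subset Y -> Q \subset 'N(N) -> N :=: 1.

Lemma norm_maxab Q Y : maximal Y Q -> corefree Y Q -> Y :!=: 1 -> 'N_Q(Y) = Y.
Proof.
move=> maxY cf ntY.
have pYQ : Y \proper Q := maxgroupp maxY.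
have sYQ := proper_sub pYQ.
have sYN : Y \subset 'N_Q(Y) by rewrite subsetI sYQ normG.
case/maxgroupP: maxY => _ /(_ [group of 'N_Q(Y)]) => mx.
have [pN|] := boolP ('N_Q(Y) \proper Q).
  by rewrite (mx pN sYN).
rewrite properEneq subsetIl andbT negbK => /eqP eqN.
case/negP: ntY; apply/eqP; apply: cf => //.
by rewrite -eqN subsetIr.
Qed.

Lemma TI_maxab Q Y : maximal Y Q -> abelian Y -> corefree Y Q -> Y :!=: 1 ->
  normedTI Y^# Q Y.
Proof.
move=> maxY abY cf ntY.
have pYQ : Y \proper Q := maxgroupp maxY.
have sYQ := proper_sub pYQ.
have nN := norm_maxab maxY cf ntY.
apply/normedTI_memJ_P; split => //.
  by apply: contra ntY; rewrite setD_eq0 subG1.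
move=> a g /setD1P[na1 Ya] Qg; apply/idP/idP => [|Yg]; last first.
  have -> : a ^ g = a.
    by rewrite /conjg -(centsP abY g Yg a Ya) mulKg.
  by rewrite !inE na1 Ya.
case/setD1P => nag1 Yag.
apply: contraR nag1 => nYg; apply/eqP.
pose D := Y :&: Y :^ g.
have Dag : a ^ g \in D by rewrite inE Yag memJ_conjg.
suff : D :=: 1 by move=> D1; move: Dag; rewrite D1 => /set1P.
apply: cf; first exact: subsetIl.
have nDY : Y \subset 'N(D) by apply: subset_trans (cent_sub D); apply: sub_abelian_cent => //; exact: subsetIl.
have nDYg : Y :^ g \subset 'N(D).
  apply: subset_trans (cent_sub D); apply: sub_abelian_cent; first by rewrite abelianJ.
  exact: subsetIr.
case/maxgroupP: maxY => _ /(_ [group of 'N_Q(D)]) => mx.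
have sYND : Y \subset 'N_Q(D) by rewrite subsetI sYQ.
have [pN|] := boolP ('N_Q(D) \proper Q).
  have eqY := mx pN sYND.
  have sYgY : Y :^ g \subset Y.
    have : Y :^ g \subset 'N_Q(D).
      by rewrite subsetI nDYg andbT sub_conjg conjGid ?groupV.
    by rewrite eqY.
  have eYg : Y :^ g = Y by apply/eqP; rewrite eqEcard sYgY cardJg leqnn.
  case/negP: nYg; rewrite -nN inE Qg; apply/normP; exact: eYg.
by rewrite properEneq subsetIl andbT negbK => /eqP <-; exact: subsetIr.
Qed.
End S.
Arguments corefree {gT} Y Q.

Section S2.
Variable gT : finGroupType.
Implicit Types G H Q Y X : {group gT}.

Lemma class_support_ord (Y Q : {group gT}) z :
  z \in class_support Y^# Q -> z != 1 /\ #[z] %| #|Y|.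
Proof.
rewrite class_supportEr => /bigcupP[h Qh].
rewrite mem_conjg => /setD1P[nz Yz].
split; last by rewrite -(orderJ z h^-1) order_dvdG.
by apply: contra nz => /eqP ->; rewrite conj1g.
Qed.

Lemma solA Q Y p : maximal Y Q -> abelian Y -> corefree Y Q -> prime p ->
  #|Q : Y| = p -> coprime p #|Y| -> solvable Q.
Proof.
move=> maxY abY cf pp iQY cop.
have sYQ := proper_sub (maxgroupp maxY).
have [Y1|ntY] := eqsVneq Y 1.
  apply: abelian_sol; apply: cyclic_abelian; apply: prime_cyclic.
  by rewrite -indexg1 -Y1 iQY.
have TI := TI_maxab maxY abY cf ntY.
have cS := card_support_normedTI TI.
set S := class_support Y^# Q in cS.
have LQ := Lagrange sYQ; rewrite iQY in LQ.
have cY1 : #|Y^#| = #|Y|.-1 by rewrite (cardsD1 1 Y) group1.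
have Y0 : 0 < #|Y| := cardG_gt0 Y.
have sSQ : S \subset Q.
  by apply: class_support_sub_norm; [apply: subset_trans (subsetDl _ _) sYQ | exact: normG].
pose T := Q :\: S.
have cT : #|T| = p by rewrite cardsDS // cS cY1 iQY -LQ; nia.
have [P sylP] := Sylow_exists p Q.
have pP := pHall_pgroup sylP.
have sPT : P \subset T.
  apply/subsetP => z Pz; rewrite inE (subsetP (pHall_sub sylP)) // andbT.
  apply/negP => /class_support_ord [nz dz].
  have pz : p.-elt z := mem_p_elt pP Pz.
  case/negP: nz; rewrite -order_eq1.
  have c1 : coprime p #[z] := coprime_dvdr dz cop.
  have : p^'.-nat #[z] by rewrite p'natE // -prime_coprime.
  by move/(pnat_1 pz) ->.
have pdQ : p %| #|Q| by rewrite -LQ dvdn_mull.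
have cP : #|P| = p.
  apply/eqP; rewrite eqn_leq -{1}cT (subset_leq_card sPT) /=.
  have := card_Hall sylP; rewrite -LQ partnM // ?prime_gt0 //.
  have Yp : (#|Y|`_p = 1)%N.
    by apply: part_p'nat; rewrite p'natE // -prime_coprime // coprime_sym.
  rewrite Yp mul1n part_pnat_id ?pnat_id //.
  by move=> ->.
have eT : P :=: T by apply/eqP; rewrite eqEcard sPT cT cP leqnn.
have nPQ : P <| Q.
  rewrite /normal (pHall_sub sylP) eT; apply: normsD; first exact: normG.
  exact: class_support_norm.
have TIPY : P :&: Y = 1 by apply: coprime_TIg; rewrite cP.
have eQ : (Q :> {set gT}) = P * Y.
  apply/eqP; rewrite eq_sym eqEcard mul_subG ?(pHall_sub sylP) //=.
  by rewrite TI_cardMg // cP -LQ mulnC.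
rewrite (series_sol nPQ) (pgroup_sol pP) /= eQ quotientMidl.
exact: abelian_sol (quotient_abelian _ abY).
Qed.

End S2.


Lemma aux2 a b p : 0 < a -> a * p.+1 - a.-1 * p.+1 = 1 + b -> b = p.
Proof. nia. Qed.

Section S3.
Variable gT : finGroupType.
Implicit Types G H Q Y X : {group gT}.

Lemma solB Q Y p : maximal Y Q -> abelian Y -> corefree Y Q -> prime p ->
  #|Q : Y| = p.+1 -> p %| #|Y| -> solvable Q.
Proof.
move=> maxY abY cf pp iQY pY.
have sYQ := proper_sub (maxgroupp maxY).
have p1 := prime_gt1 pp.
have ntY : Y :!=: 1.
  apply: contraTneq pY => ->; rewrite cards1; apply/negP => /dvdn_leq; lia.
have TI := TI_maxab maxY abY cf ntY.
have cS := card_support_normedTI TI.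
set S := class_support Y^# Q in cS.
have LQ := Lagrange sYQ; rewrite iQY in LQ.
have cY1 : #|Y^#| = #|Y|.-1 by rewrite (cardsD1 1 Y) group1.
have Y0 : 0 < #|Y| := cardG_gt0 Y.
have sSQ : S \subset Q.
  by apply: class_support_sub_norm; [apply: subset_trans (subsetDl _ _) sYQ | exact: normG].
have S1 : 1 \notin S by apply/negP => /class_support_ord[/eqP].

pose R0 := (Q :\: S) :\ 1.
have cR0 : #|R0| = p.
  have := cardsD1 1 (Q :\: S); rewrite inE S1 group1 /= cardsDS // cS cY1 iQY -LQ.
  by rewrite /R0 => h; apply: (aux2 Y0 h).
have nR0 : Q \subset 'N(R0).
  apply: normsD; last by rewrite norms1.
  apply: normsD; first exact: normG.
  exact: class_support_norm.
have [c R0c] : exists c, c \in R0.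
  by apply/set0Pn; rewrite -card_gt0 cR0 prime_gt0.
have [nc1 Qc nSc] : [/\ c != 1, c \in Q & c \notin S].
  by move: R0c; rewrite !inE => /and3P[-> -> ->].
have CY : 'C_Y[c] = 1.
  apply/trivgP/subsetP => y /setIP[Yy cyc]; apply/set1P/eqP/negPn/negP => ny.
  have Y'y : y \in Y^# by rewrite !inE ny.
  have : c \in 'C_Q[y].
    by rewrite inE Qc; apply/cent1P; apply/esym/cent1P.
  move/(subsetP (cent1_normedTI TI Y'y)) => Yc.
  by case/negP: nSc; apply: mem_class_support; rewrite !inE nc1.
have ccY : #|c ^: Y| = #|Y| by rewrite -index_cent1 CY indexg1.
have sCR : c ^: Y \subset R0 by rewrite class_sub_norm // (subset_trans sYQ nR0).
have Yp : #|Y| = p.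
  apply/eqP; rewrite eqn_leq -{1}cR0 -ccY subset_leq_card //=.
  by rewrite ccY; exact: dvdn_leq.
have eCR : c ^: Y = R0 by apply/eqP; rewrite eqEcard sCR cR0 ccY Yp leqnn.
apply: Burnside_p_a_q_b.
have -> : 2 = size [:: p; #[c]] by [].
apply: uniq_leq_size; first exact: primes_uniq.
move=> s; rewrite mem_primes => /and3P[ps _ sQ].
rewrite !inE; have [//|nsp] := eqVneq s p; rewrite /=.
have [z Qz oz] := Cauchy ps sQ.
have zS : z \notin S.
  apply/negP => /class_support_ord [_]; rewrite oz Yp => sp.
  have s1 : (s != 1)%N by rewrite neq_ltn prime_gt1 ?orbT.
  by case/eqP: nsp; apply/(prime_nt_dvdP pp s1).
have z1 : z != 1 by rewrite -order_gt1 oz prime_gt1.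
have : z \in R0 by rewrite !inE z1 zS Qz.
rewrite -eCR => /imsetP[y _ zE]; by rewrite -oz zE orderJ eqxx ?orbT.
Qed.
End S3.

Section S4.
Variable gT : finGroupType.
Implicit Types G H Q Y X L : {group gT}.

Lemma corefree_quo G X : X \subset G -> corefree (X / gcore X G) (G / gcore X G).
Proof.
move=> sXG N sNX nNG.
set L := gcore X G in N sNX nNG *.
have nLG : L <| G := gcore_normal sXG.
have sLX : L \subset X := gcore_sub X G.
have nLX : L <| X by rewrite /normal sLX (subset_trans sXG (normal_norm nLG)).
pose M := (coset L @*^-1 N)%G.
have sMX : M \subset X by rewrite -(quotientGK nLX) morphpreS.
have nMG : G \subset 'N(M).
  apply: subset_trans (morphpre_norm _ _).
  by rewrite -sub_quotient_pre // normal_norm.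
have sML : M \subset L by apply: gcore_max.
apply/trivgP; rewrite -(cosetpreK N) -(trivg_quotient L); exact: quotientS.
Qed.
End S4.

Section S5.
Variable gT : finGroupType.
Implicit Types G H Q Y X L P : {group gT}.

Lemma case_p G X p : prime p -> X \subset G -> cyclic X -> #|G : X| = p -> solvable G.
Proof.
move=> pp sXG cX iGX.
have abX := cyclic_abelian cX.
have maxX : maximal X G by apply: p_index_maximal; rewrite // iGX.
set L := gcore X G.
have nLG : L <| G := gcore_normal sXG.
have sLX : L \subset X := gcore_sub X G.
have nLX : L <| X by rewrite /normal sLX (subset_trans sXG (normal_norm nLG)).
rewrite (series_sol nLG) (abelian_sol (abelianS sLX abX)) /=.
pose Xp := 'O_p(X)%G.
have sylXp : p.-Hall(X) Xp := nilpotent_pcore_Hall p (abelian_nil abX).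
have sXpG : Xp \subset G := subset_trans (pcore_sub _ _) sXG.
have [P sylP sXpP] := Sylow_superset sXpG (pcore_pgroup _ _).
have pP := pHall_pgroup sylP.
have LG := Lagrange sXG; rewrite iGX in LG.
have cP : #|P| = (#|Xp| * p)%N.
  rewrite (card_Hall sylP) (card_Hall sylXp) -LG (partnM _ (cardG_gt0 X) (prime_gt0 pp)).
  by rewrite (part_pnat_id (pnat_id pp)).
have Xp0 : 0 < #|Xp| := cardG_gt0 Xp.
have iPXp : #|P : Xp| = p by rewrite -divgS // cP mulKn.
have nXpP : Xp <| P.
  by apply: p_maximal_normal pP _; apply: p_index_maximal; rewrite ?iPXp.
have nXpG : G \subset 'N(Xp).
  have sXN : X \subset 'N_G(Xp) by rewrite subsetI sXG normal_norm ?pcore_normal.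
  have sPN : P \subset 'N_G(Xp) by rewrite subsetI (pHall_sub sylP) normal_norm.
  case/maxgroupP: maxX => _ /(_ [group of 'N_G(Xp)]) mx.
  have [pN|] := boolP ('N_G(Xp) \proper G).
    have eN := mx pN sXN.
    have sPX : P \subset X by rewrite -eN.
    have sPXp : P \subset Xp.
      apply: pcore_max pP _; rewrite /normal sPX.
      exact: subset_trans (sub_abelian_cent abX sPX) (cent_sub _).
    have := subset_leq_card sPXp; rewrite cP => h.
    have : #|Xp| < #|Xp| * p by rewrite -{1}(muln1 #|Xp|) ltn_pmul2l // prime_gt1.
    by rewrite ltnNge h.
  by rewrite properEneq subsetIl andbT negbK => /eqP <-; exact: subsetIr.
have sXpL : Xp \subset L by apply: gcore_max => //; exact: pcore_sub.
apply: (@solA _ _ (X / L)%G p).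
- by rewrite quotient_maximal.
- exact: quotient_abelian.
- exact: corefree_quo.
- done.
- by rewrite index_quotient_eq ?subIset ?sLX ?orbT // normal_norm.
rewrite card_quotient ?normal_norm // prime_coprime // -p'natE //.
apply: pnat_dvd (indexgS X sXpL) _.
by case/and3P: sylXp.
Qed.
End S5.

Section S6.
Variable gT : finGroupType.
Implicit Types G H Q Y X L P : {group gT}.

Lemma aux3 (k m p : nat) : 1 < p -> (k * m = p.+1)%N -> 1 < m -> k < p.
Proof. nia. Qed.

Lemma case_p1 G X p : prime p -> X \subset G -> cyclic X -> #|G : X| = p.+1 ->
  p.-Sylow(G) 'O_p(X) -> 'N_G('O_p(X)) = X -> maximal X G /\ solvable G.
Proof.
move=> pp sXG cX iGX sylP0 NP0.
set P0 := 'O_p(X)%G.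
have abX := cyclic_abelian cX.
have p1 := prime_gt1 pp.
have sP0X : P0 \subset X := pcore_sub _ _.
have nP0X : X \subset 'N(P0) := normal_norm (pcore_normal _ _).
have nGX : ~~ (G \subset X) by rewrite -indexg_gt1 iGX ltnS prime_gt0.
have maxX : maximal X G.
  apply/maxgroupP; split; first by rewrite properE sXG.
  move=> H pHG sXH; suff e : (H :==: X) by apply: val_inj; exact/eqP.
  rewrite eqEsubset sXH andbT.
  have sHG := proper_sub pHG.
  have sylH : p.-Sylow(H) P0 := pHall_subl (subset_trans sP0X sXH) sHG sylP0.
  have NH : 'N_H(P0) = X.
    apply/eqP; rewrite eqEsubset subsetI sXH nP0X andbT.
    rewrite andbT; apply: subset_trans (setSI _ sHG) _; by rewrite NP0.
  have cS := card_Syl sylH; rewrite NH in cS.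
  have mS := card_Syl_mod H pp; rewrite cS in mS.
  have LI := Lagrange_index sHG sXH; rewrite iGX in LI.
  have m1 : 1 < #|G : H| by rewrite indexg_gt1; case/properP: pHG => _ [y Gy nHy]; apply/negP => /subsetP/(_ y Gy); exact/negP.
  have kp : #|H : X| < p by apply: (aux3 p1 _ m1); rewrite mulnC.
  by rewrite -indexg_eq1 -(modn_small kp) mS.
split => //.
set L := gcore X G.
have nLG : L <| G := gcore_normal sXG.
have sLX : L \subset X := gcore_sub X G.
have nLX : L <| X by rewrite /normal sLX (subset_trans sXG (normal_norm nLG)).
rewrite (series_sol nLG) (abelian_sol (abelianS sLX abX)) /=.
apply: (@solB _ _ (X / L)%G p).
- by rewrite quotient_maximal.
- exact: quotient_abelian.
- exact: corefree_quo.
- done.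
- by rewrite index_quotient_eq ?subIset ?sLX ?orbT // normal_norm.
apply/negPn/negP => npXL.
have nLP0 : P0 \subset 'N(L) := subset_trans (subset_trans sP0X sXG) (normal_norm nLG).
have sP0L : P0 \subset L.
  rewrite -quotient_sub1 //; apply/trivgP/eqP; rewrite trivg_card1; apply/eqP.
  apply: (@pnat_1 p); first exact: quotient_pgroup (pcore_pgroup _ _).
  apply: pnat_dvd (cardSg (quotientS L sP0X)) _.
  by rewrite p'natE.
have eP0 : P0 :=: 'O_p(L).
  apply/eqP; rewrite eqEsubset; apply/andP; split.
    apply: pcore_max (pcore_pgroup _ _) _.
    by rewrite /normal sP0L (subset_trans sLX nP0X).
  apply: pcore_max (pcore_pgroup _ _) _.
  exact: char_normal_trans (pcore_char _ _) nLX.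
have nP0G : P0 <| G by rewrite eP0; exact: char_normal_trans (pcore_char _ _) nLG.
case/negP: nGX; rewrite -NP0; apply/subsetP => g Gg.
by rewrite inE Gg (subsetP (normal_norm nP0G)).
Qed.
End S6.

Unset Implicit Arguments.

Theorem theorem11 (gT : finGroupType) (G : {group gT}) :
  (1 < #|G|)%N ->
  (#|G| * totient #|G| <= pdiv #|G| * psi G)%N ->
  (exists2 P : {group gT}, P \in 'Syl_(max_pdiv #|G|)(G) & (P <| G) && cyclic P)
  \/
  (solvable G /\
   exists2 M : {group gT}, maximal M G &
     cyclic M && ((#|G : M| == max_pdiv #|G|) || (#|G : M| == (max_pdiv #|G|).+1))).
Proof.
move=> G1 H.
have [x Gx tH] := exists_t G1 H.
pose X := <[x]>%G.
have sXG : X \subset G by rewrite cycle_subG.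
have tn : #|G : X| %| #|G| := dvdn_indexg G X.
have tle := nt_bound G1 tn tH.
set p := max_pdiv #|G| in tle *.
have pp : prime p := max_pdiv_prime G1.
have cX : cyclic X := cycle_cyclic x.
have abX := cyclic_abelian cX.
pose P0 := 'O_p(X)%G.
have sylXP0 : p.-Hall(X) P0 := nilpotent_pcore_Hall p (abelian_nil abX).
have sP0X : P0 \subset X := pcore_sub _ _.
have nP0X : X \subset 'N(P0) := normal_norm (pcore_normal _ _).
have t0 : 0 < #|G : X| := indexg_gt0 G X.
have sylG : ~~ (p %| #|G : X|) -> p.-Sylow(G) P0.
  move=> npt; apply/pHallP; split; first exact: subset_trans sP0X sXG.
  rewrite (card_Hall sylXP0) -(Lagrange sXG) (partnM _ (cardG_gt0 X) t0).
  have tp : (#|G : X|`_p = 1)%N by apply: part_p'nat; rewrite p'natE.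
  by rewrite tp muln1.
have sXN : X \subset 'N_G(P0) by rewrite subsetI sXG.
have npdiv : ~~ (p %| #|G : X|) -> #|'Syl_p(G)| %| #|G : X|.
  by move=> npt; rewrite (card_Syl (sylG npt)); apply: indexgS.
have left1 : ~~ (p %| #|G : X|) -> #|'Syl_p(G)| = 1%N ->
    (exists2 P : {group gT}, P \in 'Syl_p(G) & (P <| G) && cyclic P).
  move=> npt n1; exists P0; first by rewrite inE sylG.
  rewrite (cyclicS sP0X cX) andbT /normal (pHall_sub (sylG npt)) /=.
  move: n1; rewrite (card_Syl (sylG npt)) => /eqP; rewrite indexg_eq1.
  by move/subset_trans; apply; exact: subsetIr.
have mS := card_Syl_mod G pp.
have [tlt|tge] := ltnP #|G : X| p.
  have npt : ~~ (p %| #|G : X|) by apply/negP => /(dvdn_leq t0); rewrite leqNgt tlt.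
  left; apply: left1 => //.
  have := dvdn_leq t0 (npdiv npt); move: mS.
  case: #|'Syl_p(G)| => [|k]; first by rewrite mod0n.
  move=> mS le; rewrite modn_small in mS => //; exact: leq_ltn_trans le tlt.
have [tp|tp1] : #|G : X| = p \/ #|G : X| = p.+1.
  move: tle; rewrite leq_eqVlt ltnS => /orP[/eqP->|le2]; [by right | left].
  by apply/eqP; rewrite eqn_leq le2 tge.
  right; split; first exact: case_p pp sXG cX tp.
  by exists X; [apply: p_index_maximal; rewrite // tp | rewrite cX tp eqxx].
have npt : ~~ (p %| #|G : X|).
  rewrite tp1 -addn1 dvdn_addr // dvdn1; apply/negP => /eqP p1.
  by rewrite p1 in pp.
have sylP0 := sylG npt.
have dv := npdiv npt; rewrite tp1 in dv.
have k0 : 0 < #|'Syl_p(G)| by apply: dvdn_gt0 dv.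
have [n1|np1] : #|'Syl_p(G)| = 1%N \/ #|'Syl_p(G)| = p.+1.
  have := dvdn_leq (ltn0Sn p) dv; rewrite leq_eqVlt ltnS => /orP[/eqP->|le2]; [by right|left].
  move: le2; rewrite leq_eqVlt => /orP[/eqP ep|ltp].
    by move: mS; rewrite ep modnn.
  by move: mS; rewrite modn_small.
  by left; apply: left1.
right.
have NX : 'N_G(P0) = X.
  have cs := card_Syl sylP0; rewrite np1 in cs.
  have sNG : 'N_G(P0) \subset G := subsetIl _ _.
  have LI := Lagrange_index sNG sXN; rewrite -cs tp1 in LI.
  have : #|'N_G(P0) : X| == 1%N.
    by rewrite -(eqn_pmul2l (ltn0Sn p)) LI muln1.
  rewrite indexg_eq1 => sNX; apply/eqP; rewrite eqEsubset sNX sXN.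
  done.
have [mX sG] := case_p1 pp sXG cX tp1 sylP0 NX.
split => //; exists X => //; by rewrite cX tp1 eqxx orbT.
Qed.
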